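(* Let $H:\mathbb R\times\mathbb R\times\Omega\to\mathbb R$ satisfy (H1)–(H6) described in the context, fix $x\in\mathbb R$, $\omega\in\Omega$, $\mu>\tilde A(\omega)$, and let $l_\mu=(\mu-\tilde A(\omega))/c$ where $c$ is the Lipschitz constant of $H$ in $p$. Then for all $0\le t\le s$, $$\mathrm{dist}_{\mathcal H}\big(\mathcal R^\omega_{\mu,t},\mathcal R^\omega_{\mu,s}\big)\le\frac{s-t}{l_\mu}.$$
   Context: $H:\mathbb R\times\mathbb R\times\Omega\to\mathbb R$, $(p,y,\omega)\mapsto H(p,y,\omega)$. (H1) $H$ is Lipschitz in $p$ uniformly in $(y,\omega)$, with constant $c$. (H2) There are $c_0,C_0,\gamma>0$ with $-c_0|p+\gamma|\le H(p,y,\omega)\le C_0|p+\gamma|$. (H3) $\lim_{|p|\to\infty}\inf_{(y,\omega)}H(p,y,\omega)=+\infty$. (H4) There is a modulus $w$ with $|H(p,y,\omega)-H(p,x,\omega)|\le w(|x-y|(1+|p|))$. (H5) $p\mapsto H(p,y,\omega)$ is convex. (H6) $H(p,y,\omega)\ge H(0,y,\omega)$. $\tilde A(\omega)=\inf\{\mu:\ \exists v$ globally Lipschitz with $H(Dv,y,\omega)\le\mu$ in $\mathbb R$ (viscosity sense)$\}$. For $x,y\in\mathbb R$: $m_\mu(y,x,\omega)=\sup\{v(y)-v(x):\ v$ globally Lipschitz, $H(Dv,z,\omega)\le\mu$ in $\mathbb R$ in the viscosity sense$\}$. The reachable set is $\mathcal R^\omega_{\mu,t}=\{y\in\mathbb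 R:\ m_\mu(y,x,\omega)\le t\}$, and $\mathrm{dist}_{\mathcal H}(E,F)=\max\{\sup_{y\in F}\inf_{x\in E}|y-x|,\ \sup_{y\in E}\inf_{x\in F}|y-x|\}$ is the Hausdorff distance. *)

(* Defs.v *)
From HB Require Import structures.
From mathcomp Require Import all_boot all_order all_algebra.
From mathcomp Require Import all_classical all_reals all_analysis.
Set Implicit Arguments. Unset Strict Implicit. Unset Printing Implicit Defensive.
Import Order.TTheory GRing.Theory Num.Theory.
Import numFieldNormedType.Exports.
Local Open Scope classical_set_scope.
Local Open Scope ring_scope.

Section Defs.
Variables (R : realType) (Omega : Type).
Implicit Types (H : R -> R -> Omega -> R) (v phi : R -> R).

Definition glob_lipschitz v : Prop :=
  exists L : R, forall x y : R, `|v x - v y| <= L * `|x - y|.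

Definition C1 phi : Prop :=
  (forall y : R, derivable phi y 1) /\ continuous (derive1 phi).

Definition visc_subsol H (om : Omega) (mu : R) v : Prop :=
  forall (phi : R -> R) (y0 : R), C1 phi ->
    (\forall y \near y0, v y - phi y <= v y0 - phi y0) ->
    H (derive1 phi y0) y0 om <= mu.

Definition admissible H (om : Omega) (mu : R) : set (R -> R) :=
  [set v | glob_lipschitz v /\ visc_subsol H om mu v].

Definition Atilde H (om : Omega) : \bar R :=
  ereal_inf [set mu%:E | mu in [set mu : R | exists v, admissible H om mu v]].

Definition m_mu H (mu : R) (y x : R) (om : Omega) : \bar R :=
  ereal_sup [set (v y - v x)%:E | v in admissible H om mu].

Definition reach H (mu : R) (x : R) (om : Omega) (t : R) : set R :=
  [set y | (m_mu H mu y x om <= t%:E)%E].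

End Defs.

Definition hdist (R : realType) (E F : set R) : \bar R :=
  Order.max
    (ereal_sup [set ereal_inf [set (`|y - x|)%:E | x in E] | y in F])
    (ereal_sup [set ereal_inf [set (`|y - x|)%:E | x in F] | y in E]).

Definition modulus (R : realType) (w : R -> R) : Prop :=
  w 0 = 0 /\ (forall r, 0 <= r -> 0 <= w r) /\
  {in `[0, +oo[ &, {homo w : a b / a <= b}} /\
  (w r @[r --> 0^'+] --> 0).

(* Main.v *)
Require Import Defs.
From HB Require Import structures.
From mathcomp Require Import all_boot all_order all_algebra.
From mathcomp Require Import all_classical all_reals all_analysis.
From mathcomp Require Import ring lra.
Import Order.TTheory GRing.Theory Num.Theory.
Import numFieldNormedType.Exports.
Local Open Scope classical_set_scope.
Local Open Scope ring_scope.
Section S.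
Variable R : realType.

Lemma max_lip (a b c d : R) :
  `|Num.max a b - Num.max c d| <= `|a - c| + `|b - d|.
Proof.
have h1 := ler_norm (a - c); have h2 : -(a - c) <= `|a - c| by rewrite -normrN ler_norm.
have h3 := ler_norm (b - d); have h4 : -(b - d) <= `|b - d| by rewrite -normrN ler_norm.
rewrite !maxEle; case: (leP a b) => ?; case: (leP c d) => ?; rewrite ler_norml; apply/andP; split; lra.
Qed.

Lemma lip_cont (v : R -> R) : (exists L : R, forall x y : R, `|v x - v y| <= L * `|x - y|) -> continuous v.
Proof.
move=> [L HL] x; apply/cvgrPdist_le => e e0.
have M0 : 0 < `|L| + 1 by rewrite ltr_wpDl.
apply/nbhs_ballP; exists (e / (`|L| + 1)); first by apply: divr_gt0.
move=> t /=; rewrite /ball /= => ht.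
have hn : 0 <= `|x - t| by [].
have hL := ler_norm L.
have : `|x - t| * (`|L| + 1) < e by rewrite -ltr_pdivlMr //.
have key : forall A n M e' L' : R, 0 <= n -> L' <= M -> A <= L' * n -> n * (M + 1) < e' -> A <= e'.
  move=> A n M e' L' *; nra.
move=> h; exact: (key _ _ _ _ _ hn hL (HL x t) h).
Qed.

Lemma quad_deriv (K u0 a u : R) : is_derive u 1 (fun u => K * ((u - u0) * (u - u0)) + a) (K * ((u - u0) + (u - u0))).
Proof.
apply: is_derive_eq.
rewrite !subr0 addr0. by rewrite /GRing.scale /= !mulr1.
Qed.

Lemma lin_deriv (a b u : R) : is_derive u 1 (fun u => a + b * u) b.
Proof.
apply: is_derive_eq.
rewrite add0r mul1r; exact: mulr1.
Qed.

Lemma quad_cont (K u0 : R) : continuous (fun u => K * ((u - u0) + (u - u0))).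
Proof.
move=> x; apply: cvgM; first exact: cvg_cst.
by apply: cvgD; apply: cvgB => //; exact: cvg_cst.
Qed.

Lemma quad_cont2 (K u0 : R) : continuous (fun u => K * ((u - u0) * (u - u0))).
Proof.
move=> x; apply: cvgM; first exact: cvg_cst.
by apply: cvgM; apply: cvgB => //; exact: cvg_cst.
Qed.

Variable Omega : Type.

Lemma visc_max (H : R -> R -> Omega -> R) om mu (v g : R -> R) :
  visc_subsol H om mu v ->
  (forall u0, v u0 < g u0 -> exists a b : R,
     H b u0 om <= mu /\ \forall y \near u0, g y = a + b * y) ->
  visc_subsol H om mu (fun u => Num.max (v u) (g u)).
Proof.
move=> Hv Hg phi y0 [phid phic] Hn.
have [gv|vg] := leP (g y0) (v y0).
  apply: Hv => //; move: Hn; apply: filterS => y.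
  have -> : Num.max (v y0) (g y0) = v y0 by apply/max_idPl.
  move=> h; apply: le_trans h; rewrite lerD2r le_max lexx //.
have [a [b [Hb Hlin]]] := Hg _ vg.
have e0 : Num.max (v y0) (g y0) = g y0 by apply/max_idPr; exact: ltW.
have gy0 : g y0 = a + b * y0 := nbhs_singleton Hlin.
pose psi := fun y => phi y - (a + b * y).
have Hmin : \forall y \near y0, psi y0 <= psi y.
  apply: filterS2 Hn Hlin => y h1 h2.
  rewrite e0 in h1.
  have h3 : g y <= Num.max (v y) (g y) by rewrite le_max lexx orbT.
  rewrite /psi; rewrite h2 gy0 in h3 h1; lra.
move/nbhs_ballP: Hmin => [e0' epos He].
move: e0' epos He => e /= epos' He.
have epos : (0 : R) < e := epos'.
have Hd0 : is_derive y0 1 psi 0.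
  apply: (@derive1_at_min _ psi (y0 - e) (y0 + e)).
  - lra.
  - move=> t _; apply: derivableB; first exact: phid.
    have := lin_deriv a b t; case. done.
  - rewrite in_itv /=; apply/andP; split; lra.
  - move=> t; rewrite in_itv /= => /andP [t1 t2]; apply: He.
    rewrite /ball /= ltr_norml; apply/andP; split; lra.
have Hd : is_derive y0 1 (fun y => psi y + (a + b*y)) (0 + b).
  apply: is_deriveD; exact: lin_deriv.
have Ephi : (fun y => psi y + (a + b*y)) = phi.
  by apply/funext => y; rewrite /psi subrK.
rewrite Ephi in Hd.
by rewrite derive1E; case: Hd => _ ->; rewrite add0r.
Qed.

Lemma H0_le (H : R -> R -> Omega -> R) (w : R -> R) (Hw : modulus w)
  (H4 : forall p x y om, `|H p y om - H p x om| <= w (`|x - y| * (1 + `|p|)))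
  (H6 : forall p y om, H 0 y om <= H p y om) om mu' v0 u0 :
  glob_lipschitz v0 -> visc_subsol H om mu' v0 -> H 0 u0 om <= mu'.
Proof.
move=> [L HL] Hv.
apply/ler_addgt0Pr => e e0.
have [w0 [_ [_ Hwc]]] := Hw.
have hh : \forall t \near 0^'+, `|0 - w t| < e.
  by move/cvgrPdist_lt : Hwc => /(_ e e0).
move: hh; rewrite near_withinE => /nbhs_ballP [d' d0' Hd'].
have d0 : (0 : R) < d' := d0'.
have Hd : forall r : R, 0 < r -> r < d' -> w r < e.
  move=> r r0 rd; have := Hd' r; rewrite /ball /= sub0r normrN gtr0_norm // => /(_ rd r0).
  rewrite sub0r normrN => h; exact: le_lt_trans (ler_norm _) h.
pose M := `|L| + 1.
have M0 : 0 < M by rewrite /M ltr_wpDl.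
pose rad := d' / 2.
have rad0 : 0 < rad by rewrite /rad divr_gt0.
have radd : rad < d' by rewrite /rad; lra.
pose K := M / rad.
have K0 : 0 < K by rewrite /K divr_gt0.
have Krad : K * rad = M by rewrite /K divfK // gt_eqF.
pose f := fun u => v0 u - K * ((u - u0) * (u - u0)).
have fc : continuous f.
  have vc : continuous v0 by apply: lip_cont; exists L.
  move=> u; apply: cvgB; [exact: vc | exact: quad_cont2].
have fcont : {within `[u0 - rad, u0 + rad], continuous f}.
  exact: continuous_subspaceT.
have hab : u0 - rad <= u0 + rad by lra.
have [c cI cmax] := EVT_max hab fcont.
have sq : forall x : R, x * x = `|x| * `|x|.
  by move=> x; rewrite -normrM ger0_norm // -expr2 sqr_ge0.
have u0I : u0 \in `[u0 - rad, u0 + rad] by rewrite in_itv /=; apply/andP; split; lra.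
have glob : forall u, f u <= f c.
  move=> u; case: (leP `|u - u0| rad) => hu.
    apply: cmax; rewrite in_itv /=; move: hu; rewrite ler_norml => /andP [h1 h2].
    apply/andP; split; lra.
  apply: le_trans (cmax _ u0I).
  have := HL u u0; have hL := ler_norm L.
  rewrite /f subrr mulr0 mulr0 subr0 sq.
  have n0 : 0 <= `|u - u0| by [].
  have key : forall (A B n : R), 0 <= n -> rad < n -> L <= `|L| -> `|A - B| <= L * n -> A - K * (n * n) <= B.
    move=> A B n n0' hn hL' hA.
    have hA' := ler_norm (A - B).
    have h1 : 0 <= K * ((n - rad) * n) by apply: mulr_ge0; [lra| apply: mulr_ge0; lra].
    have h2 : K * rad * n = M * n by rewrite Krad.
    rewrite /M in h2; nra.
  move=> h; exact: key n0 hu hL h.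
pose phi := fun u => K * ((u - u0) * (u - u0)) + f c.
have phiD : forall u : R, is_derive u (1 : R) phi (K * ((u - u0) + (u - u0))) by move=> u; exact: quad_deriv.
have C1phi : C1 phi.
  split; first by move=> u; case: (phiD u).
  have -> : derive1 phi = (fun u => K * ((u - u0) + (u - u0))).
    by apply/funext => u; rewrite derive1E; case: (phiD u) => _ ->.
  exact: quad_cont.
have Hc : H (derive1 phi c) c om <= mu'.
  apply: (Hv phi c C1phi); exists 1; first exact: ltr01. move=> y _ /=; have := glob y; rewrite /phi /f; lra.
have H6c := H6 (derive1 phi c) c om.
have H4c := H4 0 c u0 om.
rewrite normr0 addr0 mulr1 in H4c.
have wb : w `|c - u0| <= e.
  have [->|cne] := eqVneq `|c - u0| 0; first by rewrite w0; exact: ltW.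
  apply: ltW; apply: Hd; first by rewrite lt_def cne normr_ge0.
  apply: le_lt_trans radd; move: cI; rewrite in_itv /= => /andP [h1 h2].
  rewrite ler_norml; apply/andP; split; lra.
have := ler_norm (H 0 u0 om - H 0 c om).
lra.
Qed.
End S.
Arguments max_lip {R}.

Theorem lemma4p10 (R : realType) (Omega : Type) (H : R -> R -> Omega -> R)
    (c c0 C0 gamma : R) (w : R -> R)
    (Hc : 0 < c)
    (H1 : forall p q y om, `|H p y om - H q y om| <= c * `|p - q|)
    (Hc0 : 0 < c0) (HC0 : 0 < C0) (Hgamma : 0 < gamma)
    (H2 : forall p y om,
        - c0 * `|p + gamma| <= H p y om /\ H p y om <= C0 * `|p + gamma|)
    (H3 : forall M : R, exists K : R, forall p y om,
        K <= `|p| -> M <= H p y om)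
    (Hw : modulus w)
    (H4 : forall p x y om,
        `|H p y om - H p x om| <= w (`|x - y| * (1 + `|p|)))
    (H5 : forall y om (p q lam : R), 0 <= lam <= 1 ->
        H (lam * p + (1 - lam) * q) y om
          <= lam * H p y om + (1 - lam) * H q y om)
    (H6 : forall p y om, H 0 y om <= H p y om)
    (x : R) (om : Omega) (mu : R)
    (Afin : Atilde H om \is a fin_num)
    (Hmu : (Atilde H om < mu%:E)%E)
    (t s : R) (Ht : 0 <= t) (Hts : t <= s) :
  let l_mu := (mu - fine (Atilde H om)) / c in
  (hdist (reach H mu x om t) (reach H mu x om s) <= ((s - t) / l_mu)%:E)%E.
Proof.
cbv zeta; set l := (mu - fine (Atilde H om)) / c.
set A := fine (Atilde H om).
have AE : Atilde H om = A%:E by rewrite /A fineK.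
have Amu : A < mu by rewrite -lte_fin -AE.
have l0 : 0 < l by rewrite /l divr_gt0 // subr_gt0.
have cl : c * l = mu - A by rewrite /l mulrC divfK // gt_eqF.
have HA0 : forall u, H 0 u om <= A.
  move=> u; rewrite -lee_fin -AE; apply: le_ereal_inf_tmp.
  move=> _ [mu' [v [vl vs]] <-]; rewrite lee_fin.
  exact: (@H0_le R Omega H w Hw H4 H6 om mu' v u vl vs).
have Hlin : forall b u, `|b| <= l -> H b u om <= mu.
  move=> b u hb; have := H1 b 0 u om; rewrite subr0 => h.
  have := ler_norm (H b u om - H 0 u om); have := HA0 u.
  have : c * `|b| <= c * l by rewrite ler_pM2l.
  lra.
pose d := (s - t) / l.
have d0 : 0 <= d by rewrite /d divr_ge0 ?subr_ge0 // ltW.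
have ld : l * d = s - t by rewrite /d mulrC divfK // gt_eqF.
have mxx : (m_mu H mu x x om <= t%:E)%E.
  apply: ge_ereal_sup => _ [v _ <-]; by rewrite subrr lee_fin.
have key : forall y, reach H mu x om s y ->
    exists z, reach H mu x om t z /\ `|y - z| <= d.
  move=> y ys.
  case: (leP `|y - x| d) => hyx.
    by exists x; split.
  pose sg : R := if x <= y then 1 else -1.
  have sgsg : sg * sg = 1 by rewrite /sg; case: ifP => _; rewrite ?mulr1 ?mulrNN ?mulr1.
  have sgn : forall r, `|sg * r| = `|r|.
    by move=> r; rewrite normrM /sg; case: ifP => _; rewrite ?normrN normr1 mul1r.
  have sgyx : sg * (y - x) = `|y - x|.
    rewrite /sg; case: ifP => h; rewrite ?mul1r ?mulN1r.
      by rewrite ger0_norm // subr_ge0.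
    by rewrite ler0_norm ?opprB // subr_le0 ltW // ltNge h.
  pose z := y - sg * d.
  exists z; split; last first.
    by rewrite /z opprB addrC subrK sgn ger0_norm.
  apply: ge_ereal_sup => _ [v [[L HL] vs] <-]; rewrite lee_fin.
  pose K : R := `|L|.
  have K0 : 0 <= K by rewrite /K.
  pose g := fun u => v z + sg * l * (u - z) - K * Num.max 0 (sg * (z - u)).
  pose W := fun u => Num.max (v u) (g u).
  have gle : forall u, 0 <= sg * (z - u) -> g u <= v u.
    move=> u hu.
    have hz : sg * (z - u) = `|z - u| by rewrite -(sgn (z - u)) ger0_norm.
    have hm : Num.max 0 (sg * (z - u)) = `|z - u| by rewrite -hz; apply/max_idPr.
    have e1 : sg * l * (u - z) = - l * `|z - u| by rewrite -hz; ring.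
    have := HL z u; have := ler_norm (v z - v u); have := ler_norm L.
    have n0 : 0 <= `|z - u| by [].
    rewrite /g hm e1 /K => *. nra.
  have Wadm : admissible H om mu W.
    split.
      exists (L + l + K) => a b.
      have h1 := max_lip (v a) (g a) (v b) (g b).
      have h2 := HL a b.
      have hM : `|Num.max 0 (sg * (z - a)) - Num.max 0 (sg * (z - b))| <= `|a - b|.
        apply: le_trans (max_lip _ _ _ _) _; rewrite subrr normr0 add0r -mulrBr sgn.
        have -> : z - a - (z - b) = - (a - b) by ring.
        by rewrite normrN.
      have e : g a - g b = sg * l * (a - b) - K * (Num.max 0 (sg * (z - a)) - Num.max 0 (sg * (z - b))).
        by rewrite /g; ring.
      have h3 : `|g a - g b| <= l * `|a - b| + K * `|a - b|.
        rewrite e; apply: le_trans (ler_normB _ _) _.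
        rewrite -mulrA sgn normrM gtr0_norm // normrM (ger0_norm K0) lerD2l.
        by apply: ler_wpM2l.
      have n0 : 0 <= `|a - b| by [].
      rewrite /W; nra.
    apply: (@visc_max R Omega H om mu v g vs) => u0 hu0.
    have pos : 0 < sg * (u0 - z).
      rewrite ltNge; apply/negP => hneg.
      have : 0 <= sg * (z - u0) by rewrite -opprB mulrN oppr_ge0.
      move/gle; lra.
    exists (v z - sg * l * z), (sg * l); split.
      by apply: Hlin; rewrite sgn gtr0_norm.
    apply/nbhs_ballP; exists (sg * (u0 - z)) => // y'; rewrite /ball /= => hy.
    have hy2 : 0 < sg * (y' - z).
      have -> : sg * (y' - z) = sg * (u0 - z) - sg * (u0 - y') by ring.
      have := ler_norm (sg * (u0 - y')); rewrite sgn; lra.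
    rewrite /g; have -> : Num.max 0 (sg * (z - y')) = 0.
      by apply/max_idPl; rewrite -opprB mulrN oppr_le0 ltW.
    by rewrite mulr0 subr0; ring.
  have Wx : W x = v x.
    apply/max_idPl; apply: gle.
    have -> : sg * (z - x) = sg * (y - x) - (sg * sg) * d by rewrite /z; ring.
    rewrite sgsg mul1r sgyx; lra.
  have Wy : v z + l * d <= W y.
    have gy : g y = v z + l * d.
      rewrite /g; have -> : Num.max 0 (sg * (z - y)) = 0.
        apply/max_idPl.
        have -> : sg * (z - y) = - ((sg * sg) * d) by rewrite /z; ring.
        by rewrite sgsg mul1r oppr_le0.
      have -> : sg * l * (y - z) = (sg * sg) * l * d by rewrite /z; ring.
      by rewrite sgsg mul1r mulr0 subr0.
    by rewrite -gy /W le_max lexx orbT.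
  have h : ((W y - W x)%:E <= m_mu H mu y x om)%E.
    by apply: ereal_sup_ubound; exists W.
  have := le_trans h ys; rewrite lee_fin => hs.
  lra.
rewrite /hdist ge_max; apply/andP; split.
  apply: ge_ereal_sup => _ [y ys <-].
  have [z [zt hz]] := key y ys.
  apply: (@le_trans _ _ (`|y - z|)%:E); last by rewrite lee_fin.
  by apply: ereal_inf_lbound; exists z.
apply: ge_ereal_sup => _ [y yt <-].
apply: (@le_trans _ _ (`|y - y|)%:E); last by rewrite subrr normr0 lee_fin.
apply: ereal_inf_lbound; exists y => //.
rewrite /reach /=; apply: le_trans yt _; by rewrite lee_fin.
Qed.
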